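(* Let $\varphi$ be an $\mathcal L$-sentence with $\mathbb N\models\Pi(\ulcorner\varphi\urcorner)$, and let $\alpha$ be an ordinal such that $(T_\alpha,P_\alpha)$ is consistent. Then both sequents $\varphi\Rightarrow\neg\mathrm T\varphi$ and $\neg\mathrm T\varphi\Rightarrow\varphi$ hold in $(\mathbb N,T_\alpha,P_\alpha)$.
   Context: Language. Let $\mathcal L_{\mathbb N}$ be the language of first-order Peano arithmetic and $\mathcal L=\mathcal L_{\mathbb N}\cup\{\mathrm T,\mathrm P\}$ with unary predicates $\mathrm T,\mathrm P$. $\mathcal L$-formulas are in Tait style: literals are $s=t$, $s\neq t$, $\mathrm Tt$, $\neg\mathrm Tt$, $\mathrm Pt$, $\neg\mathrm Pt$; formulas are built from literals by $\wedge,\vee,\forall,\exists$; negation of an arbitrary formula is defined by De Morgan dualities with $\neg\neg\varphi:=\varphi$. A standard Gödel numbering is fixed; $\#e$ is the code of $e$, $\ulcorner e\urcorner$ the numeral of $\#e$, $\mathrm{val}(t)$ the value of a closed term $t$, $\dot\neg$ the primitive recursive function with $\dot\neg(\#\varphi)=\#\neg\varphi$; $\mathrm T\varphi,\mathrm P\varphi$ abbreviate $\mathrm T\ulcorner\varphi\urcorner,\mathrm P\ulcorner\varphi\urcorner$. Semantics. A partial model is $(\mathbb N,T,P)$ with $\mathbb N$ the standard model and $T=(T^+,T^-)$, $P=(P^+,P^-)$ pairs of subsets of $\omega$. Strong Kleene satisfaction $\models_{SK}$: arithmetic literals evaluated in $\mathbb N$; $\mathrm Tt$ satisfied iff $\mathrm{val}(t)\in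 T^+$, $\neg\mathrm Tt$ iff $\mathrm{val}(t)\in T^-$, likewise for $\mathrm P$ with $P^\pm$; conjunction iff both, disjunction iff at least one, $\forall x\varphi(x)$ iff all numeral instances, $\exists x\varphi(x)$ iff some numeral instance. A sequent $\Gamma\Rightarrow\Delta$ of sentences holds in $(\mathbb N,T,P)$ iff, whenever all members of $\Gamma$ are satisfied, some member of $\Delta$ is. $(T,P)$ is consistent iff $T^+\cap T^-=\emptyset$ and $P^+\cap P^-=\emptyset$. Base paradoxicality. $\mathrm{PA}[\mathrm{SK}]$ is the two-sided sequent calculus for Strong Kleene logic with identity in $\mathcal L$ (initial sequents $\varphi\Rightarrow\varphi$, cut, weakening, the rule from $\Gamma\Rightarrow\Delta,\varphi$ infer $\neg\varphi,\Gamma\Rightarrow\Delta$, usual rules for $\wedge,\vee,\forall,\exists$, reflexivity $\Rightarrow t=t$, replacement from $\Gamma\Rightarrow\Delta,\varphi(t)$ infer $\Gamma\Rightarrow\Delta,s\neq t,\varphi(s)$) plus the initial sequents of Peano arithmetic and the induction rule for all $\mathcal L$-formulas. A sentence $\varphi$ is base paradoxical iff $\mathrm{PA}[\mathrm{SK}]$ derives $\varphi\Leftrightarrow\neg\mathrm T\varphi$ and $\neg\varphi\Leftrightarrow\mathrm T\varphi$ ($\Leftrightarrow$ meaning both sequents). $B(x)$ is an $\mathcal L_{\mathbb N}$-formula defining in $\mathbb N$ the set of codes of base paradoxical sentences, and $\Pi(x):=B(x)\vee B(\dot\neg x)$. Jump and sequence. Let $\mathscr P(x)$ be the $\mathcal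 L$-formula which is the disjunction of: (1) $x$ codes a sentence and $\Pi(x)$; (2) $x$ codes a sentence $\mathrm Tt$ ($t$ a closed term) and $\mathrm P(\mathrm{val}(t))$; (3) $x$ codes a sentence $\neg\mathrm Tt$ and $\mathrm P(\mathrm{val}(t))$; (4) $x$ codes a sentence $\psi\wedge\theta$ and $(\mathrm P\psi\wedge\mathrm P\theta)\vee(\mathrm T\psi\wedge\mathrm P\theta)\vee(\mathrm T\theta\wedge\mathrm P\psi)$; (5) $x$ codes a sentence $\psi\vee\theta$ and $(\mathrm P\psi\wedge\mathrm P\theta)\vee(\neg\mathrm T\psi\wedge\mathrm P\theta)\vee(\neg\mathrm T\theta\wedge\mathrm P\psi)$; (6) $x$ codes a sentence $\forall v\psi$ and $\exists y\,\mathrm P\psi(\dot y)\wedge\forall y(\mathrm P\psi(\dot y)\vee\mathrm T\psi(\dot y))$; (7) $x$ codes a sentence $\exists v\psi$ and $\exists y\,\mathrm P\psi(\dot y)\wedge\forall y(\mathrm P\psi(\dot y)\vee\neg\mathrm T\psi(\dot y))$; here $\psi(\dot y)$ is the code of the result of substituting the numeral of $y$ for $v$. Write $\mathscr P(\varphi)$ for $\mathscr P(\ulcorner\varphi\urcorner)$. Define $\Gamma_{\mathscr{TP}}(T,P)=\big((\{\#\varphi:(\mathbb N,T,P)\models_{SK}\varphi\},\{\#\varphi:(\mathbb N,T,P)\models_{SK}\neg\varphi\}),(\{\#\varphi:(\mathbb N,T,P)\models_{SK}\mathscr P(\varphi)\},\{\#\varphi:(\mathbb N,T,P)\models_{SK}\varphi\vee\neg\varphi\})\big)$,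 $\varphi$ ranging over $\mathcal L$-sentences. Define $(T_0,P_0)=((\emptyset,\emptyset),(\emptyset,\emptyset))$, $(T_{\beta+1},P_{\beta+1})=\Gamma_{\mathscr{TP}}(T_\beta,P_\beta)$, $(T_\lambda,P_\lambda)=\bigcup_{\beta<\lambda}(T_\beta,P_\beta)$ (componentwise union) for limit $\lambda$. *)

(* Defs.v *)
From Stdlib Require Import List Arith.
Import ListNotations.

Inductive term : Type :=
| tvar  : nat -> term
| tzero : term
| tsucc : term -> term
| tplus : term -> term -> term
| tmult : term -> term -> term.

(* Tait-style L-formulas: literals closed under /\, \/, forall, exists *)
Inductive formula : Type :=
| fEq  : term -> term -> formula
| fNeq : term -> term -> formula
| fT   : term -> formula
| fNT  : term -> formula
| fP   : term -> formula
| fNP  : term -> formula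
| fAnd : formula -> formula -> formula
| fOr  : formula -> formula -> formula
| fAll : formula -> formula      (* binds de Bruijn index 0 *)
| fEx  : formula -> formula.

Fixpoint neg (f : formula) : formula :=
  match f with
  | fEq s t => fNeq s t | fNeq s t => fEq s t
  | fT t => fNT t | fNT t => fT t
  | fP t => fNP t | fNP t => fP t
  | fAnd a b => fOr (neg a) (neg b)
  | fOr a b => fAnd (neg a) (neg b)
  | fAll a => fEx (neg a)
  | fEx a => fAll (neg a)
  end.

Fixpoint tsubst (s : nat -> term) (t : term) : term :=
  match t with
  | tvar i => s i
  | tzero => tzero
  | tsucc u => tsucc (tsubst s u)
  | tplus u v => tplus (tsubst s u) (tsubst s v)
  | tmult u v => tmult (tsubst s u) (tsubst s v)
  end.

Definition scons (t : term) (s : nat -> term) : nat -> term :=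
  fun i => match i with 0 => t | S j => s j end.

Definition shiftS : nat -> term := fun i => tvar (S i).

Definition up (s : nat -> term) : nat -> term :=
  scons (tvar 0) (fun i => tsubst shiftS (s i)).

Fixpoint fsubst (s : nat -> term) (f : formula) : formula :=
  match f with
  | fEq a b => fEq (tsubst s a) (tsubst s b)
  | fNeq a b => fNeq (tsubst s a) (tsubst s b)
  | fT a => fT (tsubst s a) | fNT a => fNT (tsubst s a)
  | fP a => fP (tsubst s a) | fNP a => fNP (tsubst s a)
  | fAnd a b => fAnd (fsubst s a) (fsubst s b)
  | fOr a b => fOr (fsubst s a) (fsubst s b)
  | fAll a => fAll (fsubst (up s) a)
  | fEx a => fEx (fsubst (up s) a)
  end.

Definition sub1 (t : term) (f : formula) : formula := fsubst (scons t tvar) f.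
Definition shiftF (f : formula) : formula := fsubst shiftS f.
Definition shiftL (l : list formula) : list formula := map shiftF l.

Fixpoint tclosed (k : nat) (t : term) : bool :=
  match t with
  | tvar i => Nat.ltb i k
  | tzero => true
  | tsucc u => tclosed k u
  | tplus u v | tmult u v => tclosed k u && tclosed k v
  end.

Fixpoint fclosed (k : nat) (f : formula) : bool :=
  match f with
  | fEq a b | fNeq a b => tclosed k a && tclosed k b
  | fT a | fNT a | fP a | fNP a => tclosed k a
  | fAnd a b | fOr a b => fclosed k a && fclosed k b
  | fAll a | fEx a => fclosed (S k) a
  end.

Definition sentence (f : formula) : Prop := fclosed 0 f = true.
Definition closed_term (t : term) : Prop := tclosed 0 t = true.

Fixpoint num (n : nat) : term :=
  match n with 0 => tzero | S m => tsucc (num m) end.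

Definition inst (f : formula) (n : nat) : formula := sub1 (num n) f.

(* value of a closed term in the standard model (variables, which never
   occur in closed terms, are sent to 0) *)
Fixpoint val (t : term) : nat :=
  match t with
  | tvar _ => 0
  | tzero => 0
  | tsucc u => S (val u)
  | tplus u v => val u + val v
  | tmult u v => val u * val v
  end.

Definition cpair (a b : nat) : nat := (a + b) * (a + b + 1) / 2 + b.

Fixpoint tcode (t : term) : nat :=
  match t with
  | tvar i => cpair 0 i
  | tzero => cpair 1 0
  | tsucc u => cpair 2 (tcode u)
  | tplus u v => cpair 3 (cpair (tcode u) (tcode v))
  | tmult u v => cpair 4 (cpair (tcode u) (tcode v))
  end.

Fixpoint code (f : formula) : nat :=
  match f with
  | fEq a b => cpair 0 (cpair (tcode a) (tcode b))
  | fNeq a b => cpair 1 (cpair (tcode a) (tcode b))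
  | fT a => cpair 2 (tcode a)
  | fNT a => cpair 3 (tcode a)
  | fP a => cpair 4 (tcode a)
  | fNP a => cpair 5 (tcode a)
  | fAnd a b => cpair 6 (cpair (code a) (code b))
  | fOr a b => cpair 7 (cpair (code a) (code b))
  | fAll a => cpair 8 (code a)
  | fEx a => cpair 9 (code a)
  end.

Definition gq (f : formula) : term := num (code f).

Record pmodel : Type := PModel {
  Tpos : nat -> Prop; Tneg : nat -> Prop;
  Ppos : nat -> Prop; Pneg : nat -> Prop }.

Inductive SK (M : pmodel) : formula -> Prop :=
| SK_eq   s t : val s = val t -> SK M (fEq s t)
| SK_neq  s t : val s <> val t -> SK M (fNeq s t)
| SK_T    t : Tpos M (val t) -> SK M (fT t)
| SK_NT   t : Tneg M (val t) -> SK M (fNT t)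
| SK_P    t : Ppos M (val t) -> SK M (fP t)
| SK_NP   t : Pneg M (val t) -> SK M (fNP t)
| SK_and  a b : SK M a -> SK M b -> SK M (fAnd a b)
| SK_orl  a b : SK M a -> SK M (fOr a b)
| SK_orr  a b : SK M b -> SK M (fOr a b)
| SK_all  a : (forall n, SK M (inst a n)) -> SK M (fAll a)
| SK_ex   a n : SK M (inst a n) -> SK M (fEx a).

Definition holds (M : pmodel) (G D : list formula) : Prop :=
  (forall g, In g G -> SK M g) -> exists d, In d D /\ SK M d.

Definition consistent (M : pmodel) : Prop :=
  (forall n, ~ (Tpos M n /\ Tneg M n)) /\ (forall n, ~ (Ppos M n /\ Pneg M n)).

Inductive PASK : list formula -> list formula -> Prop :=
| r_init f : PASK [f] [f]
| r_cut G D f : PASK G (f :: D) -> PASK (f :: G) D -> PASK G D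
| r_weak G D G' D' : PASK G D -> incl G G' -> incl D D' -> PASK G' D'
| r_negL G D f : PASK G (f :: D) -> PASK (neg f :: G) D
| r_andL G D a b : PASK (a :: b :: G) D -> PASK (fAnd a b :: G) D
| r_andR G D a b : PASK G (a :: D) -> PASK G (b :: D) -> PASK G (fAnd a b :: D)
| r_orL G D a b : PASK (a :: G) D -> PASK (b :: G) D -> PASK (fOr a b :: G) D
| r_orR G D a b : PASK G (a :: b :: D) -> PASK G (fOr a b :: D)
| r_allL G D a t : PASK (sub1 t a :: G) D -> PASK (fAll a :: G) D
| r_allR G D a : PASK (shiftL G) (a :: shiftL D) -> PASK G (fAll a :: D)
| r_exL G D a : PASK (a :: shiftL G) (shiftL D) -> PASK (fEx a :: G) D
| r_exR G D a t : PASK G (sub1 t a :: D) -> PASK G (fEx a :: D)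
| r_refl t : PASK [] [fEq t t]
| r_repl G D f s t : PASK G (sub1 t f :: D) -> PASK G (fNeq s t :: sub1 s f :: D)
| r_pa1 t : PASK [] [fNeq (tsucc t) tzero]
| r_pa2 s t : PASK [fEq (tsucc s) (tsucc t)] [fEq s t]
| r_pa3 t : PASK [] [fEq (tplus t tzero) t]
| r_pa4 s t : PASK [] [fEq (tplus s (tsucc t)) (tsucc (tplus s t))]
| r_pa5 t : PASK [] [fEq (tmult t tzero) tzero]
| r_pa6 s t : PASK [] [fEq (tmult s (tsucc t)) (tplus (tmult s t) s)]
| r_ind G D f t :
    PASK (f :: shiftL G) (fsubst (scons (tsucc (tvar 0)) shiftS) f :: shiftL D) ->
    PASK (sub1 tzero f :: G) (sub1 t f :: D).

Definition base_paradoxical (f : formula) : Prop :=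
  sentence f /\
  PASK [f] [fNT (gq f)] /\ PASK [fNT (gq f)] [f] /\
  PASK [neg f] [fT (gq f)] /\ PASK [fT (gq f)] [neg f].

Definition Bset (n : nat) : Prop :=
  exists f, sentence f /\ code f = n /\ base_paradoxical f.

(* N |= Pi(⌜phi⌝) where Pi(x) := B(x) \/ B(neg-dot x) and neg-dot(#phi) = #(neg phi) *)
Definition Pi_holds (f : formula) : Prop := Bset (code f) \/ Bset (code (neg f)).

Definition calP_sat (M : pmodel) (f : formula) : Prop :=
  Pi_holds f
  \/ (exists t, closed_term t /\ f = fT t /\ Ppos M (val t))
  \/ (exists t, closed_term t /\ f = fNT t /\ Ppos M (val t))
  \/ (exists a b, f = fAnd a b /\
        ((Ppos M (code a) /\ Ppos M (code b)) \/ (Tpos M (code a) /\ Ppos M (code b))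
         \/ (Tpos M (code b) /\ Ppos M (code a))))
  \/ (exists a b, f = fOr a b /\
        ((Ppos M (code a) /\ Ppos M (code b)) \/ (Tneg M (code a) /\ Ppos M (code b))
         \/ (Tneg M (code b) /\ Ppos M (code a))))
  \/ (exists a, f = fAll a /\
        (exists y, Ppos M (code (inst a y))) /\
        (forall y, Ppos M (code (inst a y)) \/ Tpos M (code (inst a y))))
  \/ (exists a, f = fEx a /\
        (exists y, Ppos M (code (inst a y))) /\
        (forall y, Ppos M (code (inst a y)) \/ Tneg M (code (inst a y)))).

Definition jump (M : pmodel) : pmodel := {|
  Tpos := fun n => exists f, sentence f /\ code f = n /\ SK M f;
  Tneg := fun n => exists f, sentence f /\ code f = n /\ SK M (neg f);
  Ppos := fun n => exists f, sentence f /\ code f = n /\ calP_sat M f;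
  Pneg := fun n => exists f, sentence f /\ code f = n /\ SK M (fOr f (neg f)) |}.

(* The stage at w is (T_alpha, P_alpha) where alpha is the order type of
   {v | lt v w}: successor stage if w has an immediate predecessor, otherwise
   the union of the earlier stages (empty when w is least). *)
Definition imm_pred {W : Type} (lt : W -> W -> Prop) (p w : W) : Prop :=
  lt p w /\ ~ (exists v, lt p v /\ lt v w).

Definition stage_step {W : Type} (lt : W -> W -> Prop) (w : W)
    (rec : forall v, lt v w -> pmodel) : pmodel :=
  let comp (sel : pmodel -> nat -> Prop) (n : nat) : Prop :=
    (exists p (h : lt p w), imm_pred lt p w /\ sel (jump (rec p h)) n)
    \/ ((~ exists p, imm_pred lt p w) /\ exists v (h : lt v w), sel (rec v h) n) in
  {| Tpos := comp Tpos; Tneg := comp Tneg; Ppos := comp Ppos; Pneg := comp Pneg |}.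

Definition stage {W : Type} (lt : W -> W -> Prop) (wf : well_founded lt) : W -> pmodel :=
  Fix wf (fun _ => pmodel) (stage_step lt).

(* Main.v *)
Require Import Defs.
From Stdlib Require Import List Arith Lia Classical FunctionalExtensionality.
Import ListNotations.

Lemma tri_S s : (s+1)*(s+1+1)/2 = s*(s+1)/2 + (s+1).
Proof.
  replace ((s+1)*(s+1+1)) with (s*(s+1) + (s+1)*2) by ring.
  rewrite Nat.div_add; lia.
Qed.

Lemma tri_mono s1 s2 : s1 < s2 -> s1*(s1+1)/2 + s1 < s2*(s2+1)/2.
Proof.
  intro H. assert (H1 : (s1+1)*(s1+1+1)/2 <= s2*(s2+1)/2).
  { apply Nat.Div0.div_le_mono; nia. }
  rewrite tri_S in H1. lia.
Qed.

Lemma cpair_inj a b c d : cpair a b = cpair c d -> a = c /\ b = d.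
Proof.
  unfold cpair. intro H.
  destruct (lt_eq_lt_dec (a+b) (c+d)) as [[Hl|He]|Hl].
  - pose proof (tri_mono _ _ Hl). lia.
  - rewrite He in H. lia.
  - pose proof (tri_mono _ _ Hl). lia.
Qed.

Lemma tcode_inj : forall t u, tcode t = tcode u -> t = u.
Proof.
  induction t; destruct u; cbn [tcode]; intro H; apply cpair_inj in H; destruct H as [Ht H];
    try discriminate Ht; try (subst; reflexivity).
  - f_equal; auto.
  - apply cpair_inj in H as [H1 H2]. f_equal; auto.
  - apply cpair_inj in H as [H1 H2]. f_equal; auto.
Qed.

Lemma code_inj : forall f g, code f = code g -> f = g.
Proof.
  induction f; destruct g; cbn [code]; intro H; apply cpair_inj in H; destruct H as [Ht H];
    try discriminate Ht;
    try (apply cpair_inj in H as [H1 H2]);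
    f_equal; auto using tcode_inj.
Qed.

Lemma neg_neg f : neg (neg f) = f.
Proof. induction f; cbn; rewrite ?IHf, ?IHf1, ?IHf2; auto. Qed.

Lemma fclosed_neg : forall f k, fclosed k (neg f) = fclosed k f.
Proof. induction f; intro k; cbn; try rewrite IHf1, IHf2; auto. Qed.

Lemma tsubst_comp : forall t s r, tsubst r (tsubst s t) = tsubst (fun i => tsubst r (s i)) t.
Proof. induction t; intros; cbn; rewrite ?IHt, ?IHt1, ?IHt2; auto. Qed.

Lemma tsubst_id : forall t, tsubst tvar t = t.
Proof. induction t; cbn; rewrite ?IHt, ?IHt1, ?IHt2; auto. Qed.

Lemma up_comp s r : (fun i => tsubst (up r) (up s i)) = up (fun i => tsubst r (s i)).
Proof.
  apply functional_extensionality; intros [|j]; cbn; auto.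
  unfold up, scons. rewrite !tsubst_comp. reflexivity.
Qed.

Lemma fsubst_comp : forall f s r, fsubst r (fsubst s f) = fsubst (fun i => tsubst r (s i)) f.
Proof.
  induction f; intros; cbn; rewrite ?tsubst_comp, ?IHf, ?IHf1, ?IHf2, ?up_comp; auto.
Qed.

Lemma up_id : up tvar = tvar.
Proof. apply functional_extensionality; intros [|j]; reflexivity. Qed.

Lemma fsubst_id : forall f, fsubst tvar f = f.
Proof. induction f; cbn; rewrite ?tsubst_id, ?up_id; congruence. Qed.

Lemma inst_up a s n : inst (fsubst (up s) a) n = fsubst (scons (num n) s) a.
Proof.
  unfold inst, sub1. rewrite fsubst_comp. f_equal.
  apply functional_extensionality; intros [|j]; cbn; auto.
  unfold up, scons. rewrite tsubst_comp. apply tsubst_id.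
Qed.

Lemma neg_fsubst : forall f s, fsubst s (neg f) = neg (fsubst s f).
Proof. induction f; intros; cbn; rewrite ?IHf, ?IHf1, ?IHf2; auto. Qed.

Lemma val_num n : val (num n) = n.
Proof. induction n; cbn; auto. Qed.

Lemma val_tsubst : forall t s r, (forall i, val (s i) = val (r i)) -> val (tsubst s t) = val (tsubst r t).
Proof. induction t; intros; cbn; auto. Qed.

Lemma shift_sub u s g : fsubst (scons u s) (shiftF g) = fsubst s g.
Proof. unfold shiftF. rewrite fsubst_comp. reflexivity. Qed.

Section Sound.
Variable M : pmodel.

Lemma SK_val : forall f s r, (forall i, val (s i) = val (r i)) ->
  SK M (fsubst s f) -> SK M (fsubst r f).
Proof.
  induction f; intros s r Hv H; cbn in *; inversion H; subst.
  - constructor. rewrite <- !(val_tsubst _ s r); auto.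
  - constructor. rewrite <- !(val_tsubst _ s r); auto.
  - constructor. rewrite <- (val_tsubst _ s r); auto.
  - constructor. rewrite <- (val_tsubst _ s r); auto.
  - constructor. rewrite <- (val_tsubst _ s r); auto.
  - constructor. rewrite <- (val_tsubst _ s r); auto.
  - constructor; eauto.
  - apply SK_orl; eauto.
  - apply SK_orr; eauto.
  - constructor. intro n. rewrite inst_up. specialize (H1 n). rewrite inst_up in H1.
    apply (IHf (scons (num n) s)); [intros [|j]; cbn; auto | exact H1].
  - apply (SK_ex _ _ n). rewrite inst_up. rewrite inst_up in H1.
    apply (IHf (scons (num n) s)); [intros [|j]; cbn; auto | exact H1].
Qed.

Lemma sub1_sat s t a :
  SK M (fsubst s (sub1 t a)) <-> SK M (fsubst (scons (num (val (tsubst s t))) s) a).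
Proof.
  unfold sub1. rewrite fsubst_comp. split; apply SK_val; intros [|j]; cbn; auto using val_num.
Qed.

Hypothesis HM : consistent M.

Lemma SK_cons : forall f s, SK M (fsubst s f) -> SK M (fsubst s (neg f)) -> False.
Proof.
  destruct HM as [HT HP].
  induction f; intros s H1 H2; cbn in *; inversion H1; inversion H2; subst; eauto.
  all: try (specialize (H0 n); rewrite inst_up in H0, H4; eauto; fail).
  all: try (specialize (H4 n); rewrite inst_up in H0, H4; eauto; fail).
  - eapply HT; eauto.
  - eapply HT; eauto.
  - eapply HP; eauto.
  - eapply HP; eauto.
Qed.

Lemma in_shiftL g G : In g (shiftL G) -> exists g0, g = shiftF g0 /\ In g0 G.
Proof. unfold shiftL; intro H; apply in_map_iff in H as [g0 [<- H]]; eauto. Qed.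

Lemma sound : forall G D, PASK G D -> forall e,
  (forall g, In g G -> SK M (fsubst e g)) -> exists d, In d D /\ SK M (fsubst e d).
Proof.
  induction 1; intros e HG.
  - exists f; split; [left; auto | apply HG; left; auto].
  - destruct (IHPASK1 e HG) as [d [[<-|Hd] Hs]]; eauto.
    apply IHPASK2. intros g [<-|Hg]; auto.
  - destruct (IHPASK e) as [d [Hd Hs]]; eauto.
  - destruct (IHPASK e) as [d [[<-|Hd] Hs]]; [intros; apply HG; right; auto| |eauto].
    exfalso. apply (SK_cons f e Hs). apply HG; left; auto.
  - assert (Hab : SK M (fsubst e (fAnd a b))) by (apply HG; left; auto).
    cbn in Hab; inversion Hab; subst.
    apply IHPASK. intros g [<-|[<-|Hg]]; auto. apply HG; right; auto.
  - destruct (IHPASK1 e HG) as [d [[<-|Hd] Hs]]; [|exists d; split; [right|]; auto].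
    destruct (IHPASK2 e HG) as [d [[<-|Hd] Hs']]; [|exists d; split; [right|]; auto].
    exists (fAnd a b); split; [left; auto|]. cbn; constructor; auto.
  - assert (Hab : SK M (fsubst e (fOr a b))) by (apply HG; left; auto).
    cbn in Hab; inversion Hab; subst.
    + apply IHPASK1. intros g [<-|Hg]; auto. apply HG; right; auto.
    + apply IHPASK2. intros g [<-|Hg]; auto. apply HG; right; auto.
  - destruct (IHPASK e HG) as [d [[<-|[<-|Hd]] Hs]].
    + exists (fOr a b); split; [left; auto|]. cbn; apply SK_orl; auto.
    + exists (fOr a b); split; [left; auto|]. cbn; apply SK_orr; auto.
    + exists d; split; [right|]; auto.
  - assert (Ha : SK M (fsubst e (fAll a))) by (apply HG; left; auto).
    cbn in Ha; inversion Ha; subst.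
    apply IHPASK. intros g [<-|Hg]; [|apply HG; right; auto].
    apply sub1_sat. specialize (H1 (val (tsubst e t))). rewrite inst_up in H1. auto.
  - destruct (classic (exists d, In d D /\ SK M (fsubst e d))) as [[d [Hd Hs]]|Hno].
    + exists d; split; [right|]; auto.
    + exists (fAll a); split; [left; auto|]. cbn; constructor; intro n; rewrite inst_up.
      destruct (IHPASK (scons (num n) e)) as [d [[<-|Hd] Hs]]; auto.
      * intros g Hg. apply in_shiftL in Hg as [g0 [-> Hg0]]. rewrite shift_sub; auto.
      * apply in_shiftL in Hd as [d0 [-> Hd0]]. rewrite shift_sub in Hs.
        exfalso; apply Hno; eauto.
  - assert (Ha : SK M (fsubst e (fEx a))) by (apply HG; left; auto).
    cbn in Ha; inversion Ha; subst. rewrite inst_up in H1.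
    destruct (IHPASK (scons (num n) e)) as [d [Hd Hs]].
    + intros g [<-|Hg]; auto. apply in_shiftL in Hg as [g0 [-> Hg0]]. rewrite shift_sub.
      apply HG; right; auto.
    + apply in_shiftL in Hd as [d0 [-> Hd0]]. rewrite shift_sub in Hs. eauto.
  - destruct (IHPASK e HG) as [d [[<-|Hd] Hs]]; [|exists d; split; [right|]; auto].
    exists (fEx a); split; [left; auto|]. cbn. apply (SK_ex _ _ (val (tsubst e t))).
    rewrite inst_up. apply sub1_sat; auto.
  - exists (fEq t t); split; [left; auto|]. cbn; constructor; auto.
  - destruct (IHPASK e HG) as [d [[<-|Hd] Hs]]; [|exists d; split; [right; right|]; auto].
    destruct (Nat.eq_dec (val (tsubst e s)) (val (tsubst e t))) as [E|E].
    + exists (sub1 s f); split; [right; left; auto|].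
      apply sub1_sat. rewrite E. apply sub1_sat; auto.
    + exists (fNeq s t); split; [left; auto|]. cbn; constructor; auto.
  - exists (fNeq (tsucc t) tzero); split; [left; auto|]. cbn; constructor; cbn; lia.
  - exists (fEq s t); split; [left; auto|].
    assert (H : SK M (fsubst e (fEq (tsucc s) (tsucc t)))) by (apply HG; left; auto).
    cbn in H; inversion H; subst. cbn; apply SK_eq; cbn in H1; lia.
  - eexists; split; [left; auto|]. cbn; constructor; cbn; lia.
  - eexists; split; [left; auto|]. cbn; constructor; cbn; lia.
  - eexists; split; [left; auto|]. cbn; constructor; cbn; lia.
  - eexists; split; [left; auto|]. cbn; constructor; cbn; lia.
  - destruct (classic (exists d, In d D /\ SK M (fsubst e d))) as [[d [Hd Hs]]|Hno].
    + exists d; split; [right|]; auto.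
    + assert (Hall : forall n, SK M (fsubst (scons (num n) e) f)).
      { induction n.
        - assert (H0 : SK M (fsubst e (sub1 tzero f))) by (apply HG; left; auto).
          apply sub1_sat in H0. exact H0.
        - destruct (IHPASK (scons (num n) e)) as [d [[<-|Hd] Hs]].
          + intros g [<-|Hg]; auto. apply in_shiftL in Hg as [g0 [-> Hg0]]. rewrite shift_sub.
            apply HG; right; auto.
          + rewrite fsubst_comp in Hs.
            replace (fun i => tsubst (scons (num n) e) (scons (tsucc (tvar 0)) shiftS i))
              with (scons (num (S n)) e) in Hs; auto.
            apply functional_extensionality; intros [|j]; reflexivity.
          + apply in_shiftL in Hd as [d0 [-> Hd0]]. rewrite shift_sub in Hs.
            exfalso; apply Hno; eauto. }
      exists (sub1 t f); split; [left; auto|]. apply sub1_sat; auto.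
Qed.

Lemma sound_holds G D : PASK G D -> holds M G D.
Proof.
  intros H HG. destruct (sound G D H tvar) as [d [Hd Hs]].
  - intros g Hg; rewrite fsubst_id; auto.
  - rewrite fsubst_id in Hs; eauto.
Qed.
End Sound.

Lemma jump_inv M f : Tneg (jump M) (code f) <-> Tpos (jump M) (code (neg f)).
Proof.
  cbn. split.
  - intros [g [Hs [Hc H]]]. apply code_inj in Hc; subst.
    exists (neg f); split; auto. unfold sentence; rewrite fclosed_neg; auto.
  - intros [g [Hs [Hc H]]]. apply code_inj in Hc; subst.
    exists f; split; auto. unfold sentence in *; rewrite fclosed_neg in Hs; auto.
Qed.

Lemma stage_eq W (lt : W -> W -> Prop) (wf : well_founded lt) w :
  stage lt wf w = stage_step lt w (fun v _ => stage lt wf v).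
Proof.
  unfold stage. apply (Fix_eq wf (fun _ => pmodel) (stage_step lt)). intros x f g Hfg.
  assert (E : f = g).
  { apply functional_extensionality_dep; intro v.
    apply functional_extensionality_dep; intro h. auto. }
  rewrite E; reflexivity.
Qed.

Lemma stage_inv W (lt : W -> W -> Prop) (wf : well_founded lt) w : forall f,
  Tneg (stage lt wf w) (code f) <-> Tpos (stage lt wf w) (code (neg f)).
Proof.
  induction w as [w IH] using (well_founded_induction wf). intro f.
  rewrite (stage_eq W lt wf w). unfold stage_step; cbn.
  split; intros [[p [h [Hi Hj]]] | [Hn [v [h Hv]]]].
  - left; exists p, h; split; auto; apply jump_inv; auto.
  - right; split; auto; exists v, h; apply IH; auto.
  - left; exists p, h; split; auto; apply jump_inv; auto.
  - right; split; auto; exists v, h; apply IH; auto.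
Qed.

Theorem mainTheorem5 (W : Type) (lt : W -> W -> Prop) (wf : well_founded lt)
    (lt_trans : forall x y z, lt x y -> lt y z -> lt x z)
    (lt_total : forall x y, lt x y \/ x = y \/ lt y x)
    (w : W) (phi : formula) :
  sentence phi ->
  Pi_holds phi ->
  consistent (stage lt wf w) ->
  holds (stage lt wf w) [phi] [fNT (gq phi)] /\
  holds (stage lt wf w) [fNT (gq phi)] [phi].
Proof.
  intros Hs HPi Hc.
  pose proof (stage_inv W lt wf w) as Hinv.
  set (M := stage lt wf w) in *.
  destruct HPi as [[psi [_ [Hc' Hbp]]] | [psi [_ [Hc' Hbp]]]];
    apply code_inj in Hc'; subst psi; destruct Hbp as [_ [P1 [P2 [P3 P4]]]].
  - split; apply sound_holds; auto.
  - rewrite neg_neg in P3, P4. split.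
    + intros HG. destruct (sound_holds M Hc _ _ P3 HG) as [d [[<-|[]] Hd]].
      exists (fNT (gq phi)); split; [left; auto|].
      inversion Hd; subst. constructor. unfold gq in *; rewrite val_num in *.
      apply Hinv; auto.
    + intros HG. apply (sound_holds M Hc _ _ P4).
      intros g [<-|[]]. assert (Hn : SK M (fNT (gq phi))) by (apply HG; left; auto).
      inversion Hn; subst. constructor. unfold gq in *; rewrite val_num in *.
      apply Hinv; auto.
Qed.
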